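(* For every dimension $d\ge 2$ and every starting point $x_0\in\mathbb{R}^d$, there exist a distribution $\rho$ over $\mathbb{R}^d\times\mathbb{R}$ and a point $x'_*\in\mathbb{R}^d$ such that: $H=\mathbb{E}_\rho[aa^\top]$ is invertible and $x'_*$ is the minimizer of $\mathcal{R}(x)=\frac12\mathbb{E}_\rho(\langle x,a\rangle-b)^2$; $\mathbb{E}[\|a\|^2 aa^\top]\preccurlyeq H$ (i.e. the fourth-moment condition with $R^2=1$); $\mathbb{E}[(b-\langle x'_*,a\rangle)^2aa^\top]=0$ (the noise condition with $\sigma=0$); $\mathbb{E}[\|a\|^2_{H^{-1}}aa^\top]\preccurlyeq dH$ (the statistical condition number bound with $\tilde\kappa=d$); $\|x'_*-x_0\|^2=1$; and for every stochastic first order algorithm (as defined in the context) run on i.i.d. samples from $\rho$ starting at $x_0$, $$\mathbb{E}[\mathcal{R}(x_{\lfloor d/2\rfloor})]-\mathcal{R}(x'_* )=\Omega\!\left(\frac1d\right),$$ i.e. it is at least $c/d$ for a universal constant $c>0$ independent of $d$, $x_0$ and the algorithm.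
   Context: $\preccurlyeq$ is the Loewner order, $\|a\|^2_{H^{-1}}=a^\top H^{-1}a$. Given i.i.d. samples $(a_i,b_i)_{i\ge0}$ from $\rho$ and an initial point $x_0$, a stochastic first order algorithm generates iterates $x_k$ with $x_k\in x_0+\mathrm{span}\{\nabla_0 f(x_0),\nabla_1 f(x_1),\dots,\nabla_{k-1}f(x_{k-1})\}$ for $k\ge1$, where $\nabla_i f(x)=a_i(\langle a_i,x\rangle-b_i)$ is the stochastic gradient at iteration $i$. *)

(* Defs.v *)
From HB Require Import structures.
From mathcomp Require Import all_boot all_order all_algebra.
From mathcomp Require Import all_classical all_reals all_analysis.
Set Implicit Arguments. Unset Strict Implicit. Unset Printing Implicit Defensive.
Import Order.TTheory GRing.Theory Num.Theory.
Local Open Scope ring_scope.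

(* A finitely supported distribution rho over R^d x R, given as a list of
   (weight, (a, b)) atoms; vectors of R^d are column vectors 'cV[R]_d. *)
Definition fdist (R : realType) (d : nat) := seq (R * ('cV[R]_d * R)).

Definition fdist_wf (R : realType) d (rho : fdist R d) : Prop :=
  (forall p, p \in rho -> 0 < p.1) /\ \sum_(p <- rho) p.1 = 1.

Definition fmass (R : realType) d (rho : fdist R d) (z : 'cV[R]_d * R) : R :=
  \sum_(p <- rho | p.2 == z) p.1.

Definition Efd (R : realType) d (V : lmodType R) (rho : fdist R d)
    (f : 'cV[R]_d * R -> V) : V :=
  \sum_(p <- rho) p.1 *: f p.2.

Definition dotv (R : realType) d (x y : 'cV[R]_d) : R := (x^T *m y) 0 0.
Definition sqnorm (R : realType) d (x : 'cV[R]_d) : R := dotv x x.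

Definition outer (R : realType) d (a : 'cV[R]_d) : 'M[R]_d := a *m a^T.

Definition Hmat (R : realType) d (rho : fdist R d) : 'M[R]_d :=
  Efd rho (fun z => outer z.1).

Definition risk (R : realType) d (rho : fdist R d) (x : 'cV[R]_d) : R :=
  2^-1 * Efd rho (fun z => (dotv x z.1 - z.2) ^+ 2).

Definition loewner_le (R : realType) d (A B : 'M[R]_d) : Prop :=
  forall v : 'cV[R]_d, (v^T *m A *m v) 0 0 <= (v^T *m B *m v) 0 0.

Definition sgrad (R : realType) d (z : 'cV[R]_d * R) (x : 'cV[R]_d) : 'cV[R]_d :=
  (dotv z.1 x - z.2) *: z.1.

Definition iid_samples (R : realType) d (rho : fdist R d)
    (dO : measure_display) (Omega : measurableType dO)
    (P : probability Omega R) (smp : nat -> Omega -> 'cV[R]_d * R) : Prop :=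
  (forall i z, measurable (smp i @^-1` [set z])%classic) /\
  (forall i z, P (smp i @^-1` [set z])%classic = (fmass rho z)%:E) /\
  (forall (n : nat) (zs : nat -> 'cV[R]_d * R),
     P [set w | forall i, (i < n)%N -> smp i w = zs i]%classic
       = (\prod_(i < n) fmass rho (zs i))%:E).

(* x is a stochastic first order algorithm started at x0 on samples smp:
   for every k (for k = 0 this forces x 0 = x0) and every outcome w,
   x_k - x0 lies in span { grad_i f(x_i) : i < k }. *)
Definition sfo_algorithm (R : realType) d
    (dO : measure_display) (Omega : measurableType dO)
    (smp : nat -> Omega -> 'cV[R]_d * R) (x0 : 'cV[R]_d)
    (x : nat -> Omega -> 'cV[R]_d) : Prop :=
  (forall k (i : 'I_d), measurable_fun setT (fun w => x k w i 0)) /\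
  (forall k w, (((x k w - x0)^T <=
      \matrix_(i < k) (sgrad (smp i w) (x i w))^T)%MS)).

(* Main.v *)
Require Import Defs.
From HB Require Import structures.
From mathcomp Require Import all_boot all_order all_algebra.
From mathcomp Require Import all_classical all_reals all_analysis.
From mathcomp Require Import ring lra zify.
From mathcomp Require Import measurable_realfun.
From Stdlib Require Import Lia.
Import Order.TTheory GRing.Theory Num.Theory.
Local Open Scope ring_scope.

Set Implicit Arguments.
Unset Strict Implicit.

Section Constr.
Variables (R : realType) (d : nat).

Definition ev (j : 'I_d) : 'cV[R]_d := delta_mx j 0.
Definition rhoX (xs : 'cV[R]_d) : fdist R d :=
  [seq (d%:R^-1, (ev j, xs j 0)) | j <- index_enum 'I_d].

Lemma EfdE (V : lmodType R) xs (f : 'cV[R]_d * R -> V) :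
  Efd (rhoX xs) f = \sum_j d%:R^-1 *: f (ev j, xs j 0).
Proof. by rewrite /Efd big_map. Qed.

Lemma dot_ev x j : dotv x (ev j) = x j 0.
Proof.
rewrite /dotv !mxE (bigD1 j) //= big1 ?addr0.
  by rewrite !mxE !eqxx mulr1.
by move=> k /negPf kj; rewrite !mxE kj mulr0.
Qed.

Lemma ev_ij (i j : 'I_d) : ev j i 0 = (i == j)%:R.
Proof. by rewrite /ev mxE eqxx andbT. Qed.

Lemma outer_ev j : outer (ev j) = delta_mx j j.
Proof. by rewrite /outer /ev trmx_delta mul_delta_mx. Qed.

Lemma sum_delta : \sum_(j : 'I_d) delta_mx j j = 1%:M :> 'M[R]_d.
Proof.
apply/matrixP => a b; rewrite summxE !mxE (bigD1 a) //= big1 ?addr0.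
  by rewrite !mxE eqxx /= eq_sym.
by move=> k /negPf ka; rewrite !mxE eq_sym ka.
Qed.

Lemma HmatE xs : Hmat (rhoX xs) = d%:R^-1%:M.
Proof.
rewrite /Hmat EfdE /=.
under eq_bigr do rewrite outer_ev.
by rewrite -scaler_sumr sum_delta scalemx1.
Qed.

Lemma riskE xs x : risk (rhoX xs) x = 2^-1 * \sum_j d%:R^-1 * (x j 0 - xs j 0) ^+ 2.
Proof. by rewrite /risk EfdE; congr (_ * _); apply: eq_bigr => j _ /=; rewrite dot_ev. Qed.

Lemma risk_ge0 xs x : 0 <= risk (rhoX xs) x.
Proof.
rewrite riskE mulr_ge0 // sumr_ge0 // => j _.
by rewrite mulr_ge0 ?invr_ge0 ?ler0n ?sqr_ge0.
Qed.

Lemma risk_xs xs : risk (rhoX xs) xs = 0.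
Proof. by rewrite riskE big1 ?mulr0 // => j _; rewrite subrr expr0n mulr0. Qed.

Lemma fourth xs : Efd (rhoX xs) (fun z => sqnorm z.1 *: outer z.1) = Hmat (rhoX xs).
Proof.
rewrite /Hmat !EfdE; apply: eq_bigr => j _ /=.
by rewrite /sqnorm dot_ev ev_ij eqxx scale1r.
Qed.

Lemma noise xs : Efd (rhoX xs) (fun z => (z.2 - dotv xs z.1) ^+ 2 *: outer z.1) = 0.
Proof.
by rewrite EfdE big1 // => j _ /=; rewrite dot_ev subrr expr0n scale0r scaler0.
Qed.

Hypothesis d0 : (0 < d)%N.

Lemma dR0 : d%:R != 0 :> R.
Proof. by rewrite pnatr_eq0 -lt0n. Qed.

Lemma Hunit xs : Hmat (rhoX xs) \in unitmx.
Proof.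
rewrite HmatE unitmxE det_scalar unitfE expf_neq0 //.
by rewrite invr_eq0 dR0.
Qed.

Lemma statcond xs :
  Efd (rhoX xs) (fun z => dotv z.1 (invmx (Hmat (rhoX xs)) *m z.1) *: outer z.1)
  = d%:R *: Hmat (rhoX xs).
Proof.
rewrite [in RHS]/Hmat !EfdE scaler_sumr; apply: eq_bigr => j _ /=.
rewrite HmatE invmx_scalar invrK mul_scalar_mx.
rewrite /dotv -scalemxAr mxE -/(dotv (ev j) (ev j)) dot_ev ev_ij eqxx mulr1.
by rewrite scalerA mulrC -scalerA.
Qed.

Definition uvec : 'cV[R]_d := const_mx (Num.sqrt (d%:R : R))^-1.

Lemma usq j : (uvec j 0) ^+ 2 = d%:R^-1.
Proof. by rewrite mxE exprVn sqr_sqrtr ?ler0n. Qed.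

Lemma sqnorm_u x0 : sqnorm ((x0 + uvec) - x0) = 1.
Proof.
rewrite addrC addKr /sqnorm /dotv mxE.
under eq_bigr do rewrite mxE -expr2 usq.
by rewrite sumr_const card_ord -(mulr_natl (d%:R^-1)) mulfV ?dR0.
Qed.

Lemma final_ineq (m : nat) : (d <= m.*2)%N ->
  4^-1 / d%:R <= 2^-1 * (d%:R^-1 * d%:R^-1) *+ m :> R.
Proof.
move=> hm.
have hD : (d%:R : R) <= m%:R * 2 by rewrite -natrM ler_nat muln2.
have D0 : (0 : R) < d%:R by rewrite ltr0n.
set D : R := d%:R in hD D0 *.
have e0 : 0 < D^-1 by rewrite invr_gt0.
have De : D * D^-1 = 1 by rewrite mulfV // gt_eqF.
set e := D^-1 in e0 De *.
rewrite -mulr_natr.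
have : 0 <= e * e * (m%:R * 2 - D) by rewrite mulr_ge0 ?mulr_ge0 ?subr_ge0 // ltW.
nra.
Qed.

Lemma pointwise (x0 xk : 'cV[R]_d) (k : nat) (J : nat -> 'I_d) (M : 'M[R]_(k, d)) :
  (forall (i : 'I_k) j, j != J i -> M i j = 0) ->
  ((xk - x0)^T <= M)%MS -> (k <= d./2)%N ->
  4^-1 / d%:R <= risk (rhoX (x0 + uvec)) xk.
Proof.
move=> hM /submxP [D hD] hk.
set Jimg := [set J (nat_of_ord i) | i : 'I_k].
have h0 j : j \notin Jimg -> (xk - x0) j 0 = 0.
  move=> hj; have := congr1 (fun A : 'M[R]_(1,d) => A 0 j) hD; rewrite !mxE => ->.
  rewrite big1 // => i _; rewrite hM ?mulr0 //.
  by apply: contraNneq hj => ->; apply: imset_f.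
have hcard : (d <= #|~: Jimg|.*2)%N.
  have := cardsC Jimg; rewrite card_ord.
  have : (#|Jimg| <= k)%N by apply: leq_trans (leq_imset_card _ _) _; rewrite card_ord.
  have := odd_double_half d; rewrite -!muln2; lia.
apply: (le_trans (final_ineq hcard)).
rewrite riskE -mulrnAr ler_wpM2l ?invr_ge0 ?ler0n //.
rewrite (bigID (fun j => j \in Jimg)) /= -[X in X <= _]add0r lerD //.
  by rewrite sumr_ge0 // => j _; rewrite mulr_ge0 ?invr_ge0 ?ler0n ?sqr_ge0.
rewrite -sumr_const [X in _ <= X](eq_bigl (fun i => i \in ~: Jimg)); last by move=> i; rewrite inE.
apply: ler_sum => j; rewrite inE => hj.
have := h0 j hj; rewrite !mxE => hx.
have -> : xk j 0 - (x0 j 0 + (Num.sqrt (d%:R : R))^-1) = - uvec j 0.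
  by rewrite mxE -[xk j 0](subrK (x0 j 0)) hx add0r opprD addrA subrr add0r.
by rewrite sqrrN usq.
Qed.
End Constr.

Theorem lemma5 (R : realType) :
  exists c : R, 0 < c /\
  forall (d : nat), (2 <= d)%N -> forall x0 : 'cV[R]_d,
  exists (rho : fdist R d) (xs : 'cV[R]_d),
    fdist_wf rho /\
    Hmat rho \in unitmx /\
    (forall x, risk rho xs <= risk rho x) /\
    loewner_le (Efd rho (fun z => sqnorm z.1 *: outer z.1)) (Hmat rho) /\
    Efd rho (fun z => (z.2 - dotv xs z.1) ^+ 2 *: outer z.1) = 0 /\
    loewner_le
      (Efd rho (fun z => dotv z.1 (invmx (Hmat rho) *m z.1) *: outer z.1))
      (d%:R *: Hmat rho) /\
    sqnorm (xs - x0) = 1 /\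
      forall (dO : measure_display) (Omega : measurableType dO)
             (P : probability Omega R)
             (smp : nat -> Omega -> 'cV[R]_d * R)
             (x : nat -> Omega -> 'cV[R]_d),
        iid_samples rho P smp -> sfo_algorithm smp x0 x ->
        ((\int[P]_w (risk rho (x d./2 w))%:E) - (risk rho xs)%:E
           >= (c / d%:R)%:E)%E.
Proof.
Local Open Scope classical_set_scope.
exists 4^-1; split; first by rewrite invr_gt0 ltr0n.
move=> d hd x0.
have d0 : (0 < d)%N by apply: leq_trans hd.
set xs := x0 + uvec R d.
exists (rhoX xs), xs.
split.
  split; first by move=> p /mapP [j _ ->] /=; rewrite invr_gt0 ltr0n.
  rewrite big_map /= sumr_const card_ord -(mulr_natl (d%:R^-1)) mulfV // pnatr_eq0 -lt0n //.
split; first exact: Hunit.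
split; first by move=> y; rewrite risk_xs risk_ge0.
split; first by move=> v; rewrite fourth.
split; first exact: noise.
split; first by move=> v; rewrite statcond.
split; first exact: sqnorm_u.
move=> dO Omega P smp x [hmeas [hid hind]] [hxm hspan].
set k := d./2.
pose z := fun j : 'I_d => (@ev R d j, xs j 0).
have zinj : injective z.
  move=> a b [] /(congr1 (fun A : 'cV[R]_d => A a 0)); rewrite !ev_ij eqxx.
  by case: eqP => // _ /eqP; rewrite oner_eq0.
have fm j : fmass (rhoX xs) (z j) = d%:R^-1.
  rewrite /fmass big_map (eq_bigl (fun i => i == j)) ?big_pred1_eq //.
  by move=> i /=; apply/eqP/eqP => [/zinj|->].
have UE i : smp i @^-1` range z = \big[setU/set0]_(j < d) (smp i @^-1` [set z j]).
  rewrite -bigcup_seq; apply/seteqP; split => w /=.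
    by case=> j _ hj; exists j => //=; rewrite mem_index_enum.
  by case=> j _ hj; exists j.
have mG i : measurable (smp i @^-1` range z).
  by rewrite UE; apply: bigsetU_measurable => j _; apply: hmeas.
have Gi i : P (smp i @^-1` range z) = 1%E.
  rewrite UE measure_semi_additive_ord //; last by rewrite -UE.
    rewrite (eq_bigr (fun j => (d%:R^-1)%:E)); last by move=> j _; rewrite -(fm j); exact: hid.
    rewrite sumEFin sumr_const card_ord -(mulr_natl (d%:R^-1)) mulfV //.
    by rewrite pnatr_eq0 -lt0n.
  move=> a b _ _ [w [ha hb]]; apply: zinj; by rewrite -ha -hb.
have hN : P.-negligible (\bigcup_i ~` (smp i @^-1` range z)).
  apply: negligible_bigcup => i; apply/negligibleP; first exact: measurableC.
  by have := probability_setC P (mG i); rewrite Gi subee.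
rewrite risk_xs sube0.
have -> : ((4^-1 / d%:R)%:E = \int[P]_w (cst (4^-1 / d%:R)%:E) w)%E.
  have hPT : (P : {measure set Omega -> \bar R}) [set: Omega] = 1%E by exact: probability_setT.
  by rewrite integral_cst // hPT mule1.
apply: ae_ge0_le_integral => //.
- by move=> w _; rewrite /= lee_fin mulr_ge0 ?invr_ge0 ?ler0n.
- by move=> w _; rewrite lee_fin risk_ge0.
- apply/measurable_EFinP.
  have -> : (fun w => risk (rhoX xs) (x k w)) =
      (fun w => 2^-1 * \sum_j d%:R^-1 * (x k w j 0 - xs j 0) ^+ 2).
    by apply/funext => w; rewrite riskE.
  apply: measurable_funM => //; apply: measurable_sum => j.
  apply: measurable_funM => //; apply: measurable_funX; apply: measurable_funB => //.
- apply: (negligibleS _ hN) => w /= hnot.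
  apply: contrapT => hNw; apply: hnot => _.
  have hG : forall i, exists j, z j = smp i w.
    move=> i; apply: contrapT => hi; apply: hNw; exists i => //= -[j _ hj].
    by apply: hi; exists j.
  have [J hJ] := choice hG.
  rewrite lee_fin.
  apply: (pointwise d0 (J := J) _ (hspan k w)) => //.
  move=> i j hj; rewrite !mxE -(hJ i) /sgrad /= mxE ev_ij (negPf hj) mulr0.
  done.
Qed.
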